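(* Let $V$ be an upper probability on $(\Omega,\mathcal{F})$ and $\theta:\Omega\to\Omega$ a measurable map preserving $V$. Consider the statements: (i) $\theta$ is ergodic with respect to $V$; (ii) every bounded measurable $\xi:\Omega\to\mathbb{R}$ with $\xi(\theta\omega)=\xi(\omega)$ for all $\omega$ is constant quasi-surely; (iii) every measurable $\xi:\Omega\to\mathbb{R}$ with $\xi\circ\theta=\xi$ quasi-surely is constant quasi-surely. Then (iii) implies (ii) and (ii) implies (i). Moreover, if $V$ is continuous from below, then (ii) and (i) are equivalent; if $V$ is continuous, all three statements are equivalent.
   Context: An upper probability is $V(A)=\sup_{P\in\mathcal{P}}P(A)$ for a nonempty set $\mathcal{P}$ of finitely additive probabilities on $\mathcal{F}$. $\theta$ preserves $V$ if $V(\theta^{-1}A)=V(A)$ for all $A\in\mathcal{F}$. $V$ is continuous from below if $V(A_n)\to V(A)$ for $A_n\uparrow A$, and continuous if also $V(A_n)\to V(A)$ for $A_n\downarrow A$. A statement holds quasi-surely if it holds outside a set $A$ with $V(A)=0$; ''$\xi$ is constant quasi-surely'' means there is $c\in\mathbb{R}$ with $V(\{\xi\ne c\})=0$. $\theta$ is ergodic with respect to $V$ if for every $B\in\mathcal{F}$ with $\theta^{-1}B=B$: $V(B)\in\{0,1\}$, and $V(B)=0$ or $V(B^c)=0$. *)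

(* Defs.v *)
From HB Require Import structures.
From mathcomp Require Import all_boot all_order all_algebra.
From mathcomp Require Import all_classical all_reals topology normedtype sequences measure lebesgue_stieltjes_measure lebesgue_measure.
Set Implicit Arguments. Unset Strict Implicit. Unset Printing Implicit Defensive.
Import Order.TTheory GRing.Theory Num.Theory.
Import numFieldNormedType.Exports.
Local Open Scope classical_set_scope.
Local Open Scope ring_scope.

Section Defs.
Context (d : measure_display) (T : measurableType d) (R : realType).

(* A finitely additive probability on the sigma-algebra F of T
   (only its values on measurable sets matter). *)
Definition fin_add_prob (P : set T -> R) : Prop :=
  [/\ forall A, measurable A -> 0 <= P A,
      P setT = 1 &
      forall A B, measurable A -> measurable B -> A `&` B = set0 ->
        P (A `|` B) = P A + P B].

Definition upper_prob (Ps : set (set T -> R)) (A : set T) : R :=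
  sup [set P A | P in Ps].

Definition preserves (V : set T -> R) (theta : T -> T) : Prop :=
  forall A, measurable A -> V (theta @^-1` A) = V A.

Definition cont_below (V : set T -> R) : Prop :=
  forall A : nat -> set T, (forall n, measurable (A n)) ->
    (forall n, A n `<=` A n.+1) ->
    V (A n) @[n --> \oo] --> V (\bigcup_n A n).

Definition cont_above (V : set T -> R) : Prop :=
  forall A : nat -> set T, (forall n, measurable (A n)) ->
    (forall n, A n.+1 `<=` A n) ->
    V (A n) @[n --> \oo] --> V (\bigcap_n A n).

Definition cont (V : set T -> R) : Prop := cont_below V /\ cont_above V.

Definition quasi_surely (V : set T -> R) (Q : T -> Prop) : Prop :=
  exists A, [/\ measurable A, V A = 0 & forall w, ~ A w -> Q w].

Definition qs_constant (V : set T -> R) (xi : T -> R) : Prop :=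
  exists c : R, V [set w | xi w <> c] = 0.

Definition ergodic (V : set T -> R) (theta : T -> T) : Prop :=
  forall B, measurable B -> theta @^-1` B = B ->
    (V B = 0 \/ V B = 1) /\ (V B = 0 \/ V (~` B) = 0).

Definition stmt_ii (V : set T -> R) (theta : T -> T) : Prop :=
  forall xi : T -> R, measurable_fun setT xi ->
    (exists M : R, forall w, `|xi w| <= M) ->
    (forall w, xi (theta w) = xi w) -> qs_constant V xi.

Definition stmt_iii (V : set T -> R) (theta : T -> T) : Prop :=
  forall xi : T -> R, measurable_fun setT xi ->
    quasi_surely V (fun w => xi (theta w) = xi w) -> qs_constant V xi.

End Defs.

(* Main.v *)
Require Import Defs.
From mathcomp Require Import all_boot all_order all_algebra.
From mathcomp Require Import all_classical all_reals topology normedtype sequences measure lebesgue_stieltjes_measure lebesgue_measure.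
From mathcomp Require Import measurable_realfun numfun.
From mathcomp Require Import ring lra.
Set Implicit Arguments. Unset Strict Implicit. Unset Printing Implicit Defensive.
Import Order.TTheory GRing.Theory Num.Theory.
Import numFieldNormedType.Exports.
Local Open Scope classical_set_scope.
Local Open Scope ring_scope.

Section Aux.
Context (d : measure_display) (T : measurableType d) (R : realType).
Variable (Ps : set (set T -> R)).
Hypothesis hPs : forall P, Ps P -> fin_add_prob P.
Hypothesis hne : Ps !=set0.
Local Notation V := (upper_prob Ps).

Lemma P0 (P : set T -> R) : fin_add_prob P -> P set0 = 0.
Proof.
case=> _ _ hadd; have := hadd set0 set0 measurable0 measurable0 (setI0 _).
rewrite setU0 => h; lra.
Qed.

Lemma PC (P : set T -> R) A : fin_add_prob P -> measurable A -> P (~` A) = 1 - P A.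
Proof.
move=> hP mA; case: (hP) => _ h1 hadd.
have := hadd A (~` A) mA (measurableC mA) (setICr A).
rewrite setUCr h1 => h; lra.
Qed.

Lemma Pmono (P : set T -> R) A B : fin_add_prob P -> measurable A -> measurable B ->
  A `<=` B -> P A <= P B.
Proof.
move=> hP mA mB AB; case: (hP) => h0 _ hadd.
have E : B = A `|` (B `\` A).
  apply/seteqP; split=> x /=; last by case=> [/AB|[]].
  by move=> Bx; case: (pselect (A x)) => Ax; [left|right].
have := hadd A (B `\` A) mA (measurableD mB mA).
rewrite -E => ->; last by apply/seteqP; split=> x // [? []].
have := h0 _ (measurableD mB mA); lra.
Qed.

Lemma Ple1 (P : set T -> R) A : fin_add_prob P -> measurable A -> P A <= 1.
Proof.
move=> hP mA; have := PC hP mA; case: (hP) => h0 _ _.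
have := h0 _ (measurableC mA); lra.
Qed.

Lemma PU (P : set T -> R) A B : fin_add_prob P -> measurable A -> measurable B ->
  P (A `|` B) <= P A + P B.
Proof.
move=> hP mA mB; case: (hP) => h0 _ hadd.
have E : A `|` B = A `|` (B `\` A).
  apply/seteqP; split=> x /=; last by case=> [|[]]; [left|right].
  by case=> [Ax|Bx]; [left|case: (pselect (A x)) => Ax; [left|right]].
rewrite E (hadd _ _ mA (measurableD mB mA)); last first.
  by apply/seteqP; split=> x // [? []].
by rewrite lerD2l; apply: (Pmono hP (measurableD mB mA) mB) => x [].
Qed.

Lemma V_ub A : measurable A -> has_ubound [set P A | P in Ps].
Proof. by move=> mA; exists 1 => _ [P PP <-]; apply: Ple1 => //; apply: hPs. Qed.

Lemma VP P A : Ps P -> measurable A -> P A <= V A.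
Proof. by move=> PP mA; apply: ub_le_sup; [apply: V_ub|exists P]. Qed.

Lemma Vle A x : (forall P, Ps P -> P A <= x) -> V A <= x.
Proof.
move=> h; apply: ge_sup.
  by case: hne => P PP; exists (P A), P.
by move=> _ [P PP <-]; apply: h.
Qed.

Lemma Vge0 A : measurable A -> 0 <= V A.
Proof.
move=> mA; case: hne => P PP; apply: le_trans (VP PP mA).
by case: (hPs PP) => h0 _ _; apply: h0.
Qed.

Lemma Vle1 A : measurable A -> V A <= 1.
Proof. by move=> mA; apply: Vle => P PP; apply: Ple1 => //; apply: hPs. Qed.

Lemma VT : V setT = 1.
Proof.
apply/eqP; rewrite eq_le Vle1 //=; case: hne => P PP.
by apply: le_trans (VP PP measurableT); case: (hPs PP) => _ -> _.
Qed.

Lemma V0 : V set0 = 0.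
Proof.
apply/eqP; rewrite eq_le Vge0 // andbT; apply: Vle => P PP.
by rewrite P0 //; apply: hPs.
Qed.

Lemma Vmono A B : measurable A -> measurable B -> A `<=` B -> V A <= V B.
Proof.
move=> mA mB AB; apply: Vle => P PP; apply: le_trans (VP PP mB).
by apply: Pmono => //; apply: hPs.
Qed.

Lemma VU A B : measurable A -> measurable B -> V (A `|` B) <= V A + V B.
Proof.
move=> mA mB; apply: Vle => P PP; apply: le_trans (PU (hPs PP) mA mB) _.
by apply: lerD; apply: VP.
Qed.

Lemma Vnull_sub A B : measurable A -> measurable B -> B `<=` A -> V A = 0 -> V B = 0.
Proof.
move=> mA mB BA VA; apply/eqP; rewrite eq_le Vge0 // andbT -VA.
exact: Vmono.
Qed.

Lemma VU0 A B : measurable A -> measurable B -> V A = 0 -> V B = 0 -> V (A `|` B) = 0.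
Proof.
move=> mA mB hA hB; apply/eqP; rewrite eq_le Vge0 ?andbT; last exact: measurableU.
by have := VU mA mB; rewrite hA hB addr0.
Qed.

Lemma Vnot_both A : measurable A -> V A = 0 -> V (~` A) = 0 -> False.
Proof.
move=> mA hA hC; have := VU mA (measurableC mA); rewrite setUCr VT hA hC.
by rewrite addr0 ler10.
Qed.

Lemma VC1 A : measurable A -> V (~` A) = 0 -> V A = 1.
Proof.
move=> mA hC; apply/eqP; rewrite eq_le Vle1 //=; case: hne => P PP.
apply: le_trans (VP PP mA); rewrite -[P A]opprK -[1]opprK lerN2.
have := VP PP (measurableC mA); rewrite hC PC //; [lra| exact: hPs].
Qed.


Lemma small_inv (e : R) : 0 < e -> exists k : nat, k.+1%:R^-1 < e.
Proof.
move=> e0; exists (Num.bound (e^-1)).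
rewrite invf_plt ?posrE ?ltr0Sn //.
apply: lt_trans (archi_boundP _) _; first by rewrite invr_ge0 ltW.
by rewrite ltr_nat.
Qed.

Fixpoint accum (F : nat -> set T) (n : nat) : set T :=
  if n is m.+1 then accum F m `|` F m.+1 else F 0%N.

Lemma null_bigcup (F : nat -> set T) : cont_below V ->
  (forall n, measurable (F n)) -> (forall n, V (F n) = 0) ->
  V (\bigcup_n F n) = 0.
Proof.
move=> cb mF VF.
have mG n : measurable (accum F n) by elim: n => //= n ih; apply: measurableU.
have VG n : V (accum F n) = 0 by elim: n => //= n ih; apply: VU0.
have E : \bigcup_n accum F n = \bigcup_n F n.
  apply/seteqP; split=> x [n _].
    elim: n => [|n ih] /=; first by move=> ?; exists 0%N.
    by case=> [/ih//|?]; exists n.+1.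
  move=> Fx; exists n => //; case: n Fx => [//|n Fx] /=; by right.
have := cb (accum F) mG (fun n x Gx => or_introl Gx).
rewrite E (_ : (fun n => V (accum F n)) = fun=> 0); last exact: funext.
move=> h; apply/esym; exact: (cvg_unique _ (cvg_cst 0) h).
Qed.

Definition Lset (xi : T -> R) (r : R) := [set w | xi w <= r].

Lemma mLset xi r : measurable_fun setT xi -> measurable (Lset xi r).
Proof.
move=> mxi; have := mxi measurableT _ (measurable_itv `]-oo, r]).
rewrite setTI; congr measurable; apply/seteqP; split=> w /=;
  by rewrite in_itv.
Qed.

Lemma Kconst xi : cont_below V -> measurable_fun setT xi ->
  (forall r, V (Lset xi r) = 0 \/ V (~` Lset xi r) = 0) -> qs_constant V xi.
Proof.
move=> cb mxi hyp.
pose S := [set r | V (~` Lset xi r) = 0].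
have mL r := @mLset xi r mxi.
have up r s : S r -> r <= s -> S s.
  move=> Sr rs; apply: Vnull_sub (measurableC (mL r)) (measurableC (mL s)) _ Sr.
  move=> w /= h1 h2; apply: h1; rewrite /Lset /= in h2 *; exact: le_trans h2 rs.
have Sne : S !=set0.
  apply/not_existsP => hS; apply: (Vnot_both measurableT).
    rewrite (_ : setT = \bigcup_n Lset xi n%:R).
      apply: null_bigcup => // n; try exact: mL.
      by case: (hyp n%:R) => // /hS.
    apply/seteqP; split=> w // _; exists (Num.bound `|xi w|) => //.
    rewrite /Lset /=; apply: le_trans (ler_norm _) _.
    by apply/ltW/archi_boundP.
  by rewrite setCT V0.
have [n nS] : exists n : nat, ~ S (- n%:R).
  apply/existsNP => hS; apply: (Vnot_both measurableT).
    rewrite (_ : setT = \bigcup_n ~` Lset xi (- n%:R)).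
      apply: null_bigcup => // n; try exact/measurableC/mL.
    apply/seteqP; split=> w // _; exists (Num.bound `|xi w|) => //.
    rewrite /Lset /=; apply/negP; rewrite -ltNge ltrNl.
    apply: le_lt_trans (archi_boundP _) => //.
    by rewrite -normrN ler_norm.
  by rewrite setCT V0.
have lbS : has_lbound S.
  exists (- n%:R) => r Sr; rewrite leNgt; apply/negP => rn.
  by apply: nS; apply: up Sr (ltW rn).
pose c := inf S.
have hA : V (\bigcup_k ~` Lset xi (c + k.+1%:R^-1)) = 0.
  apply: null_bigcup => // k; try exact/measurableC/mL.
  have ck : inf S < c + k.+1%:R^-1 by rewrite ltrDl invr_gt0 ltr0Sn.
  have [y Sy yc] := inf_lt Sne ck.
  by apply: up Sy (ltW yc).
have hB : V (\bigcup_k Lset xi (c - k.+1%:R^-1)) = 0.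
  apply: null_bigcup => // k; try exact/mL.
  case: (hyp (c - k.+1%:R^-1)) => // Sr; exfalso.
  have h := ge_inf lbS Sr; rewrite -/c in h.
  have : 0 < k.+1%:R^-1 :> R by rewrite invr_gt0 ltr0Sn.
  move: h; clearbody c; set e := (k.+1%:R^-1 : R); lra.
exists c.
rewrite (_ : [set w | xi w <> c] = (\bigcup_k Lset xi (c - k.+1%:R^-1)) `|`
      (\bigcup_k ~` Lset xi (c + k.+1%:R^-1))).
  apply: VU0 => //; apply: bigcupT_measurable => k; last apply: measurableC;
    exact: mL.
apply/seteqP; split=> w /=.
  move=> /eqP; rewrite neq_lt => /orP[xc|cx].
    left; have /small_inv [k hk] : 0 < c - xi w by rewrite subr_gt0.
    exists k => //; rewrite /Lset /=; move: hk; clearbody c.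
    set e := (k.+1%:R^-1 : R); lra.
  right; have /small_inv [k hk] : 0 < xi w - c by rewrite subr_gt0.
  exists k => //; rewrite /Lset /=; apply/negP; rewrite -ltNge; move: hk; clearbody c.
  set e := (k.+1%:R^-1 : R); lra.
clearbody c; case=> -[k _]; rewrite /Lset /= => h;
  have : 0 < k.+1%:R^-1 :> R by rewrite invr_gt0 ltr0Sn.
  move: h; set e := (k.+1%:R^-1 : R); lra.
move/negP: h; rewrite -ltNge; set e := (k.+1%:R^-1 : R); lra.
Qed.


Lemma Qerg (theta : T -> T) : measurable_fun setT theta -> preserves V theta ->
  ergodic V theta -> cont_below V -> forall B A, measurable B -> measurable A ->
  V A = 0 -> (forall w, ~ A w -> (B (theta w) <-> B w)) ->
  V B = 0 \/ V (~` B) = 0.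
Proof.
move=> mth pres erg cb B A mB mA VA hA.
have mth1 X : measurable X -> measurable (theta @^-1` X).
  by move=> mX; have := mth measurableT X mX; rewrite setTI.
have mpre n X : measurable X -> measurable (iter n theta @^-1` X).
  elim: n X => [|n ih] X mX //=.
  exact: (ih (theta @^-1` X) (mth1 X mX)).
have Vpre n X : measurable X -> V (iter n theta @^-1` X) = V X.
  elim: n X => [|n ih] X mX //=.
  by rewrite -(pres X mX); exact: (ih (theta @^-1` X) (mth1 X mX)).
pose N := \bigcup_n (iter n theta @^-1` A).
have mN : measurable N by apply: bigcupT_measurable => n; apply: mpre.
have VN : V N = 0.
  by apply: null_bigcup => // n; [apply: mpre| rewrite Vpre].
pose B' := \bigcap_m \bigcup_n (iter (n + m) theta @^-1` B).
have mB' : measurable B'.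
  by apply: bigcapT_measurable => m; apply: bigcupT_measurable => n; apply: mpre.
have inv : theta @^-1` B' = B'.
  apply/seteqP; split=> w /= h m _.
    have [n _ hn] := h m I; exists n.+1 => //=.
    by move: hn; rewrite /= -iterSr.
  have [n _ hn] := h m.+1 I; exists n => //=.
  by move: hn; rewrite /= addnS iterSr.
have key w : ~ N w -> (B' w <-> B w).
  move=> Nw.
  have iterB n : B (iter n theta w) <-> B w.
    elim: n => [//|n ih] /=; rewrite -ih; apply: hA => Aw; apply: Nw.
    by exists n.
  split.
    by move=> h; have [n _ hn] := h 0%N I; exact: (iterB (n + 0)%N).1 hn.
  by move=> Bw m _; exists 0%N => //; exact: (iterB (0 + m)%N).2 Bw.
have [_ [h|h]] := erg B' mB' inv.
  left; apply: (@Vnull_sub (B' `|` N)).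
  - exact: measurableU.
  - exact: mB.
  - move=> w Bw; case: (pselect (N w)) => Nw; [by right|left].
    by apply/key.
  - exact: VU0.
right; apply: (@Vnull_sub (~` B' `|` N)).
- exact: measurableU (measurableC mB') mN.
- exact: measurableC.
- move=> w Bw; case: (pselect (N w)) => Nw; [by right|left].
  by move=> /(key _ Nw).
- by apply: VU0 => //; exact: measurableC.
Qed.

Lemma erg_iii (theta : T -> T) : measurable_fun setT theta -> preserves V theta ->
  cont_below V -> ergodic V theta -> stmt_iii V theta.
Proof.
move=> mth pres cb erg xi mxi [A [mA VA hA]].
apply: Kconst => // r.
apply: (Qerg mth pres erg cb (mLset r mxi) mA VA) => w /hA.
by rewrite /Lset /= => ->.
Qed.

End Aux.

Theorem theorem5 (d : measure_display) (T : measurableType d) (R : realType)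
  (Ps : set (set T -> R))
  (hPs : forall P, Ps P -> fin_add_prob P)
  (hne : Ps !=set0)
  (theta : T -> T)
  (htheta : measurable_fun setT theta)
  (hpres : preserves (upper_prob Ps) theta) :
  let V := upper_prob Ps in
  [/\ stmt_iii V theta -> stmt_ii V theta,
      stmt_ii V theta -> ergodic V theta,
      cont_below V -> (stmt_ii V theta <-> ergodic V theta) &
      cont V -> (ergodic V theta <-> stmt_ii V theta) /\
                (stmt_ii V theta <-> stmt_iii V theta)].
Proof.
move=> V; rewrite {}/V.
have h1 : stmt_iii (upper_prob Ps) theta -> stmt_ii (upper_prob Ps) theta.
  move=> h3 xi mxi _ hinv; apply: h3 => //.
  by exists set0; split; [exact: measurable0 | exact: V0 | move=> w _; apply: hinv].
have h2 : stmt_ii (upper_prob Ps) theta -> ergodic (upper_prob Ps) theta.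
  move=> h B mB hB.
  have [|||c hc] := h (\1_B : T -> R).
  - exact: measurable_indic.
  - exists 1 => w; rewrite indicE; case: (w \in B); by rewrite ?normr1 ?normr0.
  - move=> w; rewrite !indicE; congr (_%:R).
    have -> : (theta w \in B) = (w \in theta @^-1` B) by [].
    by rewrite hB.
  have [E|E] : upper_prob Ps B = 0 \/ upper_prob Ps (~` B) = 0.
  - have [c1|c1] := eqVneq c 1.
      right; rewrite -hc c1; congr (upper_prob Ps); apply/seteqP; split=> w /=.
        by move=> nB; rewrite indicE memNset //=; apply/eqP; rewrite eq_sym oner_neq0.
      by rewrite indicE => h' Bw; apply: h'; rewrite mem_set.
    have [c0|c0] := eqVneq c 0.
      left; rewrite -hc c0; congr (upper_prob Ps); apply/seteqP; split=> w /=.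
        by move=> Bw; rewrite indicE mem_set //=; apply/eqP; rewrite oner_neq0.
      by rewrite indicE => h' ; apply: contrapT => Bw; apply: h'; rewrite memNset.
    exfalso; apply: (Vnot_both hPs hne measurableT); last by rewrite setCT V0.
    rewrite -hc; congr (upper_prob Ps); apply/seteqP; split=> w // _ /=.
    rewrite indicE; case: (w \in B) => /= e.
      by move: c1; rewrite -e eqxx.
    by move: c0; rewrite -e eqxx.
  - by split; [left|left].
  - by split; [right; apply: VC1|right].
have h4 : cont_below (upper_prob Ps) -> ergodic (upper_prob Ps) theta ->
    stmt_ii (upper_prob Ps) theta.
  by move=> cb erg; apply: h1; apply: erg_iii.
split => //.
  by move=> cb; split; [apply: h2| apply: h4].
move=> [cb ca]; split; first by split; [apply: h4|apply: h2].
split; first by move=> h; apply: erg_iii => //; apply: h2.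
exact: h1.
Qed.
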